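(* Let $M_\bullet=(M_n,\mathrm{tr}_n,e_{n+1})_{n\ge0}$ be a Markov tower of modulus $d$, and for $n\ge1$ let $E_{n+1}:M_{n+1}\to M_n$ be the trace-preserving conditional expectation. Then for all $n\ge1$: (1) the map $M_n\ni y\mapsto ye_n\in M_{n+1}$ is injective; (2) for all $x\in M_{n+1}$, $d^2E_{n+1}(xe_n)$ is the unique $y\in M_n$ with $xe_n=ye_n$; (3) $\mathrm{tr}_{n+1}(xe_n)=d^{-2}\mathrm{tr}_n(x)$ for all $x\in M_n$; (4) $e_nM_{n+1}e_n=M_{n-1}e_n$; (5) $X_{n+1}:=M_ne_nM_n$ (linear span) is a two-sided ideal of $M_{n+1}$, so $M_{n+1}=X_{n+1}\oplus Y_{n+1}$ as von Neumann algebras (set $X_0=X_1=(0)$, $Y_0=M_0$, $Y_1=M_1$); (6) $ae_nb\mapsto ap_nb$ defines a $*$-isomorphism from $X_{n+1}$ onto the Jones basic construction $\langle M_n,p_n\rangle=M_np_nM_n$ of $M_{n-1}\subset(M_n,\mathrm{tr}_n)$ acting on $L^2(M_n,\mathrm{tr}_n)$, where $p_n$ is the Jones projection; (7) under this isomorphism, the canonical trace $\mathrm{Tr}_{n+1}$ on $M_np_nM_n$ (with $\mathrm{Tr}_{n+1}(ap_nb)=\mathrm{tr}_n(ab)$) equals $d^2\mathrm{tr}_{n+1}|_{X_{n+1}}$; (8) if $y\in Y_{n+1}$ and $x\in X_n$ then $yx=0$ in $M_{n+1}$; hence $E_{n+1}(Y_{n+1})\subseteq Y_n$; (9) if $Y_n=(0)$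 then $Y_k=(0)$ for all $k\ge n$.
   Context: A Markov tower $M_\bullet=(M_n,\mathrm{tr}_n,e_{n+1})_{n\ge0}$ is a sequence of finite-dimensional von Neumann algebras with unital inclusions $M_n\subset M_{n+1}$, faithful tracial states with $\mathrm{tr}_{n+1}|_{M_n}=\mathrm{tr}_n$, and projections $e_n\in M_{n+1}$ ($n\ge1$) such that: (M1) $e_i=e_i^2=e_i^*$, $e_ie_j=e_je_i$ for $|i-j|>1$, and $e_ie_{i\pm1}e_i=d^{-2}e_i$ for a fixed $d>0$ (the modulus); (M2) $e_nxe_n=E_n(x)e_n$ for $x\in M_n$, where $E_n:M_n\to M_{n-1}$ is the trace-preserving conditional expectation; (M3) $E_{n+1}(e_n)=d^{-2}$; (M4) $M_{n+1}e_n=M_ne_n$. It is connected if $\dim M_0=1$. *)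

(* Defs.v *)
From HB Require Import structures.
From mathcomp Require Import all_boot all_order all_algebra.
Set Implicit Arguments. Unset Strict Implicit. Unset Printing Implicit Defensive.
Import Order.TTheory GRing.Theory Num.Theory.
Local Open Scope ring_scope.

(* The scalar field is an arbitrary numClosedFieldType C (the
   complex numbers are the intended instance; C = R[i] with R real closed).
   The whole tower lives inside one ambient C-algebra A (e.g. its inductive
   limit): M n : A -> Prop is the subset M_n, the inclusions M_n ⊂ M_(n+1)
   are set inclusions, all M_n share the unit of A (unital inclusions), and
   the traces tr_n are the restrictions of a single map tr : A -> C
   (so tr_(n+1)|M_n = tr_n automatically). *)

Section Defs.
Variables (C : numClosedFieldType) (A : algType C).

Record is_star_alg (star : A -> A) : Prop := {
  star_add : forall x y, star (x + y) = star x + star y;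
  star_scale : forall (c : C) x, star (c *: x) = c^* *: star x;
  star_mul : forall x y, star (x * y) = star y * star x;
  star_invol : forall x, star (star x) = x }.

Definition fin_dim (S : A -> Prop) : Prop :=
  exists s : seq A, (forall i, (i < size s)%N -> S s`_i) /\
    forall x, S x -> exists c : nat -> C, x = \sum_(i < size s) c i *: s`_i.

(* unital finite-dimensional *-subalgebra of A; together with a faithful
   positive trace this is exactly a finite-dimensional von Neumann algebra *)
Record fd_star_subalg (star : A -> A) (S : A -> Prop) : Prop := {
  sa_one : S 1;
  sa_add : forall x y, S x -> S y -> S (x + y);
  sa_scale : forall (c : C) x, S x -> S (c *: x);
  sa_mul : forall x y, S x -> S y -> S (x * y);
  sa_star : forall x, S x -> S (star x);
  sa_fin : fin_dim S }.

Record faithful_tracial_state (star : A -> A) (tr : A -> C) (S : A -> Prop)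
  : Prop := {
  fts_lin : forall (c : C) x y, S x -> S y -> tr (c *: x + y) = c * tr x + tr y;
  fts_unit : tr 1 = 1;
  fts_trace : forall x y, S x -> S y -> tr (x * y) = tr (y * x);
  fts_pos : forall x, S x -> 0 <= tr (star x * x);
  fts_faithful : forall x, S x -> tr (star x * x) = 0 -> x = 0 }.

Record cond_exp (star : A -> A) (tr : A -> C) (N Mn : A -> Prop) (E : A -> A)
  : Prop := {
  ce_range : forall x, Mn x -> N (E x);
  ce_id : forall y, N y -> E y = y;
  ce_lin : forall (c : C) x y, Mn x -> Mn y -> E (c *: x + y) = c *: E x + E y;
  ce_bimod : forall a b x, N a -> N b -> Mn x -> E (a * x * b) = a * E x * b;
  ce_pos : forall z, Mn z -> exists w, N w /\ E (star z * z) = star w * w;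
  ce_tr : forall x, Mn x -> tr (E x) = tr x }.

Record markov_tower (star : A -> A) (tr : A -> C) (M : nat -> A -> Prop)
    (e : nat -> A) (E : nat -> A -> A) (d : C) : Prop := {
  mt_star : is_star_alg star;
  mt_alg : forall n, fd_star_subalg star (M n);
  mt_incl : forall n x, M n x -> M n.+1 x;
  mt_tr : forall n, faithful_tracial_state star tr (M n);
  mt_d : 0 < d;
  mt_E : forall n, (0 < n)%N -> cond_exp star tr (M n.-1) (M n) (E n);
  mt_e_in : forall n, (0 < n)%N -> M n.+1 (e n);
  mt_e_idem : forall n, (0 < n)%N -> e n * e n = e n;
  mt_e_sa : forall n, (0 < n)%N -> star (e n) = e n;
  mt_e_comm : forall i j, (0 < i)%N -> (i.+1 < j)%N -> e i * e j = e j * e i;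
  mt_e_TL1 : forall i, (0 < i)%N -> e i * e i.+1 * e i = d ^- 2 *: e i;
  mt_e_TL2 : forall i, (0 < i)%N -> e i.+1 * e i * e i.+1 = d ^- 2 *: e i.+1;
  mt_M2 : forall n x, (0 < n)%N -> M n x -> e n * x * e n = E n x * e n;
  mt_M3 : forall n, (0 < n)%N -> E n.+1 (e n) = d ^- 2 *: 1;
  mt_M4 : forall n z, (0 < n)%N ->
    ((exists x, M n.+1 x /\ z = x * e n) <-> (exists y, M n y /\ z = y * e n)) }.

Definition pairs_in (S : A -> Prop) (s : seq (A * A)) : Prop :=
  forall ab, ab \in s -> S ab.1 /\ S ab.2.

Definition Xsp (M : nat -> A -> Prop) (e : nat -> A) (n : nat) (x : A) : Prop :=
  match n with
  | m.+2 => exists s : seq (A * A), pairs_in (M m.+1) s /\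
                x = \sum_(ab <- s) ab.1 * e m.+1 * ab.2
  | _ => x = 0
  end.

(* Y_n = the complementary ideal of X_n in M_n, i.e. its annihilator;
   in particular Y_0 = M_0 and Y_1 = M_1. *)
Definition Ysp (M : nat -> A -> Prop) (e : nat -> A) (n : nat) (y : A) : Prop :=
  M n y /\ forall x, Xsp M e n x -> y * x = 0.

(* inner product of L^2(M_n, tr_n): <x, y> = tr(y^* x) *)
Definition ip (star : A -> A) (tr : A -> C) (x y : A) : C := tr (star y * x).

(* p is the Jones projection: the orthogonal projection of L^2(M_n,tr_n)
   onto L^2(M_(n-1),tr_(n-1)) (operators on L^2(M_n) are represented by
   maps A -> A, considered on M_n) *)
Definition jones_proj (star : A -> A) (tr : A -> C) (M : nat -> A -> Prop)
    (n : nat) (p : A -> A) : Prop :=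
  forall xi, M n xi -> M n.-1 (p xi) /\
    forall eta, M n.-1 eta -> ip star tr (xi - p xi) eta = 0.

Definition opeq (S : A -> Prop) (T U : A -> A) : Prop :=
  forall xi, S xi -> T xi = U xi.

Definition op_of (p : A -> A) (s : seq (A * A)) : A -> A :=
  fun xi => \sum_(ab <- s) ab.1 * p (ab.2 * xi).

End Defs.

(* Main.v *)
Require Import Defs.
From HB Require Import structures.
From mathcomp Require Import all_boot all_order all_algebra.
Import Order.TTheory GRing.Theory Num.Theory.
Local Open Scope ring_scope.
Set Implicit Arguments. Unset Strict Implicit. Unset Printing Implicit Defensive.

Section Tower.
Variables (C : numClosedFieldType) (A : algType C)
    (star : A -> A) (tr : A -> C) (M : nat -> A -> Prop) (e : nat -> A)
    (E : nat -> A -> A) (d : C).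
Hypothesis H : markov_tower star tr M e E d.

Lemma M1 k : M k 1. Proof. exact: sa_one (mt_alg H k). Qed.
Lemma MD k x y : M k x -> M k y -> M k (x + y). Proof. move=> hx hy; exact: (sa_add (mt_alg H k) hx hy). Qed.
Lemma MZ k c x : M k x -> M k (c *: x). Proof. move=> hx; exact: (sa_scale (mt_alg H k) c hx). Qed.
Lemma MM k x y : M k x -> M k y -> M k (x * y). Proof. move=> hx hy; exact: (sa_mul (mt_alg H k) hx hy). Qed.
Lemma MS k x : M k x -> M k (star x). Proof. move=> hx; exact: (sa_star (mt_alg H k) hx). Qed.
Lemma M0 k : M k 0. Proof. by rewrite -(scale0r 1); apply: MZ; apply: M1. Qed.
Lemma MN k x : M k x -> M k (- x). Proof. by move=> h; rewrite -scaleN1r; apply: MZ. Qed.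
Lemma MB k x y : M k x -> M k y -> M k (x - y). Proof. by move=> *; apply: MD => //; apply: MN. Qed.
Lemma Mle k j x : (k <= j)%N -> M k x -> M j x.
Proof.
move=> kj; rewrite -(subnKC kj); elim: (j - k)%N => [|i IH] Mx; first by rewrite addn0.
by rewrite addnS; apply: (mt_incl H (IH Mx)).
Qed.
Lemma MS1 k x : M k x -> M k.+1 x. Proof. move=> h; exact: (mt_incl H h). Qed.
Lemma Mpred n x : (0 < n)%N -> M n.-1 x -> M n x.
Proof. by move=> n0; apply: Mle; rewrite leq_pred. Qed.
Lemma Msum k (I : Type) (r : seq I) (P : pred I) (F : I -> A) :
  (forall i, P i -> M k (F i)) -> M k (\sum_(i <- r | P i) F i).
Proof. by move=> h; apply: big_ind => //; [apply: M0 | apply: MD]. Qed.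

Lemma tr0 : tr 0 = 0.
Proof.
have := fts_lin (mt_tr H 0) 1 (@M0 0) (@M0 0).
by rewrite scale1r addr0 mul1r => /eqP; rewrite -subr_eq0 opprD addrA subrr sub0r oppr_eq0 => /eqP.
Qed.
Lemma trZ k c x : M k x -> tr (c *: x) = c * tr x.
Proof. by move=> h; have := fts_lin (mt_tr H k) c h (@M0 k); rewrite !addr0 tr0 addr0. Qed.
Lemma trD k x y : M k x -> M k y -> tr (x + y) = tr x + tr y.
Proof. by move=> hx hy; have := fts_lin (mt_tr H k) 1 hx hy; rewrite scale1r mul1r. Qed.
Lemma trN k x : M k x -> tr (- x) = - tr x.
Proof. by move=> h; rewrite -scaleN1r (trZ _ h) mulN1r. Qed.
Lemma trB k x y : M k x -> M k y -> tr (x - y) = tr x - tr y.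
Proof. by move=> hx hy; rewrite (trD hx (MN hy)) (trN hy). Qed.
Lemma trC k x y : M k x -> M k y -> tr (x * y) = tr (y * x).
Proof. move=> hx hy; exact: (fts_trace (mt_tr H k) hx hy). Qed.
Lemma tr_faith k x : M k x -> tr (star x * x) = 0 -> x = 0.
Proof. move=> hx; exact: (fts_faithful (mt_tr H k) hx). Qed.
Lemma trsum k (I : Type) (r : seq I) (F : I -> A) :
  (forall i, M k (F i)) -> tr (\sum_(i <- r) F i) = \sum_(i <- r) tr (F i).
Proof.
move=> h; elim: r => [|i r IH]; first by rewrite !big_nil tr0.
by rewrite !big_cons (trD (h i)) ?IH //; apply: Msum.
Qed.

Lemma trsum_in k (I : eqType) (r : seq I) (F : I -> A) :
  (forall i, i \in r -> M k (F i)) -> tr (\sum_(i <- r) F i) = \sum_(i <- r) tr (F i).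
Proof.
elim: r => [|i r IH] h; first by rewrite !big_nil tr0.
have hi := h i (mem_head _ _).
have hr : forall j, j \in r -> M k (F j) by move=> j jr; apply: h; rewrite inE jr orbT.
rewrite !big_cons (trD hi) ?IH //; rewrite big_seq; apply: Msum => j; exact: hr.
Qed.

Lemma star0 : star 0 = 0.
Proof. by rewrite -(scale0r 0) (star_scale (mt_star H)) conjC0 !scale0r. Qed.
Lemma starD x y : star (x + y) = star x + star y. Proof. exact: (star_add (mt_star H) x y). Qed.
Lemma starM x y : star (x * y) = star y * star x. Proof. exact: (star_mul (mt_star H) x y). Qed.
Lemma starK x : star (star x) = x. Proof. exact: (star_invol (mt_star H) x). Qed.
Lemma starsum (I : Type) (r : seq I) (F : I -> A) :
  star (\sum_(i <- r) F i) = \sum_(i <- r) star (F i).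
Proof. by elim: r => [|i r IH]; rewrite ?big_nil ?star0 // !big_cons starD IH. Qed.


Section Ek.
Variable k : nat.
Hypothesis k0 : (0 < k)%N.
Lemma E0 : E k 0 = 0.
Proof. by apply: (ce_id (mt_E H k0)); apply: M0. Qed.
Lemma Elin c x y : M k x -> M k y -> E k (c *: x + y) = c *: E k x + E k y.
Proof. move=> hx hy; exact: (ce_lin (mt_E H k0) c hx hy). Qed.
Lemma EZ c x : M k x -> E k (c *: x) = c *: E k x.
Proof. by move=> hx; have := Elin c hx (@M0 k); rewrite !addr0 E0 addr0. Qed.
Lemma ED x y : M k x -> M k y -> E k (x + y) = E k x + E k y.
Proof. by move=> hx hy; have := Elin 1 hx hy; rewrite !scale1r. Qed.
Lemma EN x : M k x -> E k (- x) = - E k x.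
Proof. by move=> hx; rewrite -scaleN1r EZ // scaleN1r. Qed.
Lemma EB x y : M k x -> M k y -> E k (x - y) = E k x - E k y.
Proof. by move=> hx hy; rewrite ED ?EN //; apply: MN. Qed.
Lemma Ebim a b x : M k.-1 a -> M k.-1 b -> M k x -> E k (a * x * b) = a * E k x * b.
Proof. move=> ha hb hx; exact: (ce_bimod (mt_E H k0) ha hb hx). Qed.
Lemma EL a x : M k.-1 a -> M k x -> E k (a * x) = a * E k x.
Proof. by move=> ha hx; have := Ebim ha (@M1 _) hx; rewrite !mulr1. Qed.
Lemma ER b x : M k.-1 b -> M k x -> E k (x * b) = E k x * b.
Proof. by move=> hb hx; have := Ebim (@M1 _) hb hx; rewrite !mul1r. Qed.
Lemma Etr x : M k x -> tr (E k x) = tr x.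
Proof. move=> hx; exact: (ce_tr (mt_E H k0) hx). Qed.
Lemma Erange x : M k x -> M k.-1 (E k x).
Proof. move=> hx; exact: (ce_range (mt_E H k0) hx). Qed.
Lemma Eid y : M k.-1 y -> E k y = y.
Proof. move=> hy; exact: (ce_id (mt_E H k0) hy). Qed.
End Ek.

Lemma dne0 : d != 0. Proof. exact: lt0r_neq0 (mt_d H). Qed.
Lemma d2K (y : A) : d ^+ 2 *: (d ^- 2 *: y) = y.
Proof. by rewrite scalerA mulfV ?scale1r // expf_neq0 // dne0. Qed.
Lemma d2K' (y : A) : d ^- 2 *: (d ^+ 2 *: y) = y.
Proof. by rewrite scalerA mulVf ?scale1r // expf_neq0 // dne0. Qed.
Lemma d2Kc (y : C) : d ^+ 2 * (d ^- 2 * y) = y.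
Proof. by rewrite mulrA mulfV ?mul1r // expf_neq0 // dne0. Qed.

Section En.
Variable n : nat.
Hypothesis n0 : (0 < n)%N.
Let Sn0 : (0 < n.+1)%N := ltn0Sn n.

Lemma ein : M n.+1 (e n). Proof. exact: (mt_e_in H n0). Qed.
Lemma ein2 : M n.+2 (e n). Proof. exact: MS1 ein. Qed.
Lemma estar : star (e n) = e n. Proof. exact: (mt_e_sa H n0). Qed.
Lemma eidem : e n * e n = e n. Proof. exact: (mt_e_idem H n0). Qed.
Lemma M2 x : M n x -> e n * x * e n = E n x * e n.
Proof. move=> hx; exact: (mt_M2 H n0 hx). Qed.

Lemma E_ye y : M n y -> E n.+1 (y * e n) = d ^- 2 *: y.
Proof.
move=> hy.
by rewrite (EL Sn0 hy ein) (mt_M3 H n0) -scalerAr mulr1.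
Qed.

Lemma Kchar x : M n.+1 x ->
  M n (d ^+ 2 *: E n.+1 (x * e n)) /\ x * e n = (d ^+ 2 *: E n.+1 (x * e n)) * e n.
Proof.
move=> hx; have [h _] := mt_M4 H (x * e n) n0.
have [y [hy ->]] : exists y, M n y /\ x * e n = y * e n by apply: h; exists x.
by rewrite E_ye // d2K.
Qed.

Lemma inj1 y1 y2 : M n y1 -> M n y2 -> y1 * e n = y2 * e n -> y1 = y2.
Proof.
move=> h1 h2 eq; apply/eqP; rewrite -subr_eq0; apply/eqP.
have hy := MB h1 h2; set y := y1 - y2 in hy *.
have ye : y * e n = 0 by rewrite mulrBl eq subrr.
have hyy := MM (MS hy) hy.
have : E n.+1 (star y * y * e n) = 0 by rewrite -mulrA ye mulr0 E0.
rewrite E_ye // => /eqP; rewrite scaler_eq0 invr_eq0 expf_eq0 /= (negbTE dne0) /= => /eqP h0.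
by apply: (tr_faith hy); rewrite h0 tr0.
Qed.

Lemma tr3 x : M n x -> tr (x * e n) = d ^- 2 * tr x.
Proof.
move=> hx; rewrite -(Etr Sn0 (MM (MS1 hx) ein)) E_ye //.
exact: (trZ _ hx).
Qed.

Lemma item4 z : (exists x, M n.+1 x /\ z = e n * x * e n) <->
             (exists y, M n.-1 y /\ z = y * e n).
Proof.
split.
  case=> x [hx ->]; have [hy eq] := Kchar hx.
  set y := d ^+ 2 *: _ in hy eq.
  exists (E n y); split; first exact: (Erange n0 hy).
  by rewrite -mulrA eq mulrA M2.
case=> y [hy ->]; exists y; split; first exact: MS1 (Mpred n0 hy).
by rewrite (M2 (Mpred n0 hy)) (Eid n0 hy).
Qed.

Lemma p_eq p y : jones_proj star tr M n p -> M n y -> p y = E n y.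
Proof.
move=> jp hy; have [hp orth] := jp y hy.
have hE := Erange n0 hy.
have hw := MB hp hE; set w := p y - E n y in hw *.
have hwn := Mpred n0 hw; have hsw := MS hwn.
have o1 := orth w hw; rewrite /ip in o1.
have o2 : tr (star w * (y - E n y)) = 0.
  rewrite mulrBr (trB (MM hsw hy) (MM hsw (Mpred n0 hE))).
  rewrite -(EL n0 (MS hw) hy) (Etr n0 (MM hsw hy)).
  by rewrite subrr.
have : tr (star w * w) = 0.
  have -> : star w * w = star w * (y - E n y) - star w * (y - p y).
    by rewrite -mulrBr opprB addrC addrA subrK.
  by rewrite (trB (MM hsw (MB hy (Mpred n0 hE))) (MM hsw (MB hy (Mpred n0 hp)))) o1 o2 subrr.
move/(tr_faith hwn)/eqP; rewrite subr_eq0 => /eqP //.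
Qed.

Definition Xn x := exists s : seq (A * A), pairs_in (M n) s /\
   x = \sum_(ab <- s) ab.1 * e n * ab.2.

Lemma XspE x : Xsp M e n.+1 x <-> Xn x.
Proof. by rewrite /Xn /Xsp -(prednK n0). Qed.

Lemma X_ind (P : A -> Prop) : P 0 -> (forall x y, P x -> P y -> P (x + y)) ->
  (forall a b, M n a -> M n b -> P (a * e n * b)) -> forall x, Xn x -> P x.
Proof.
move=> P0 PD Pab x [s [hs ->]]; elim: s hs => [|ab s IH] hs; first by rewrite big_nil.
rewrite big_cons; apply: PD; last by apply: IH => u us; apply: hs; rewrite inE us orbT.
by have [h1 h2] := hs ab (mem_head _ _); apply: Pab.
Qed.

Lemma X0 : Xn 0. Proof. by exists [::]; split => //; rewrite big_nil. Qed.
Lemma Xab a b : M n a -> M n b -> Xn (a * e n * b).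
Proof.
by move=> ha hb; exists [:: (a, b)]; split; [move=> u; rewrite inE => /eqP -> | rewrite big_seq1].
Qed.
Lemma XD x y : Xn x -> Xn y -> Xn (x + y).
Proof.
move=> [s [hs ->]] [t [ht ->]]; exists (s ++ t); split; last by rewrite big_cat.
by move=> u; rewrite mem_cat => /orP [] ?; [apply: hs | apply: ht].
Qed.
Lemma XZ c x : Xn x -> Xn (c *: x).
Proof.
move=> [s [hs ->]]; exists [seq (c *: ab.1, ab.2) | ab <- s]; split.
  move=> u /mapP [ab abs ->] /=; have [h1 h2] := hs ab abs; split => //; exact: MZ.
rewrite big_map scaler_sumr; apply: eq_bigr => ab _ /=.
by rewrite -!scalerAl.
Qed.
Lemma XB x y : Xn x -> Xn y -> Xn (x - y).
Proof. by move=> hx hy; apply: XD => //; rewrite -scaleN1r; apply: XZ. Qed.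
Lemma Xsum (I : Type) (r : seq I) (F : I -> A) :
  (forall i, Xn (F i)) -> Xn (\sum_(i <- r) F i).
Proof. by move=> h; apply: big_ind => //; [apply: X0 | apply: XD]. Qed.
Lemma XM x : Xn x -> M n.+1 x.
Proof.
move=> hx; apply: (X_ind (P := M n.+1)) hx; [exact: M0 | exact: MD | move=> a b ha hb].
by apply: MM; [apply: MM|]; [apply: MS1 | apply: ein | apply: MS1].
Qed.
Lemma XmulL m x : M n.+1 m -> Xn x -> Xn (m * x).
Proof.
move=> hm hx; apply: (X_ind (P := fun x => Xn (m * x))) hx; first by rewrite mulr0; apply: X0.
  by move=> x1 x2 h1 h2; rewrite mulrDr; apply: XD.
move=> a b ha hb; have [hy eq] := Kchar (MM hm (MS1 ha)).
by rewrite !mulrA eq; apply: Xab.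
Qed.
Lemma XmulR m x : M n.+1 m -> Xn x -> Xn (x * m).
Proof.
move=> hm hx; apply: (X_ind (P := fun x => Xn (x * m))) hx; first by rewrite mul0r; apply: X0.
  by move=> x1 x2 h1 h2; rewrite mulrDl; apply: XD.
move=> a b ha hb; have hbm := MS (MM (MS1 hb) hm).
have [hy eq] := Kchar hbm.
have : star (star (b * m) * e n) = star ((d ^+ 2 *: E n.+1 (star (b * m) * e n)) * e n).
  by rewrite -eq.
rewrite !starM !starK estar => eq2.
by rewrite -!mulrA eq2 mulrA; apply: Xab => //; apply: MS; rewrite -starM.
Qed.
Lemma Xstar x : Xn x -> Xn (star x).
Proof.
move=> hx; apply: (X_ind (P := fun x => Xn (star x))) hx; first by rewrite star0; apply: X0.
  by move=> x1 x2 h1 h2; rewrite starD; apply: XD.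
by move=> a b ha hb; rewrite !starM estar mulrA; apply: Xab; apply: MS.
Qed.
Lemma Xnondeg x : Xn x -> (forall y, Xn y -> tr (y * x) = 0) -> x = 0.
Proof. by move=> hx h; apply: (tr_faith (XM hx)); apply: h; apply: Xstar. Qed.

Lemma trlin w k (c : 'I_k -> C) (F : 'I_k -> A) : M n.+1 w ->
  (forall i, M n.+1 (F i)) ->
  tr (w * \sum_i c i *: F i) = \sum_i c i * tr (w * F i).
Proof.
move=> hw hF; rewrite mulr_sumr (trsum (k := n.+1)); last first.
  by move=> i; rewrite -scalerAr; apply: MZ; apply: MM.
by apply: eq_bigr => i _; rewrite -scalerAr (trZ _ (MM hw (hF i))).
Qed.

Definition spn (u : seq A) x := exists c : 'I_(size u) -> C,
  x = \sum_(i < size u) c i *: u`_i.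

Lemma spn0 u : spn u 0.
Proof. by exists (fun _ => 0); rewrite big1 // => i _; rewrite scale0r. Qed.
Lemma spnD u x y : spn u x -> spn u y -> spn u (x + y).
Proof.
move=> [c1 ->] [c2 ->]; exists (fun i => c1 i + c2 i); rewrite -big_split /=.
by apply: eq_bigr => i _; rewrite scalerDl.
Qed.
Lemma spnZ u a x : spn u x -> spn u (a *: x).
Proof.
move=> [c ->]; exists (fun i => a * c i); rewrite scaler_sumr.
by apply: eq_bigr => i _; rewrite scalerA.
Qed.
Lemma spn_sum u (I : Type) (r : seq I) (F : I -> A) :
  (forall i, spn u (F i)) -> spn u (\sum_(i <- r) F i).
Proof. by move=> h; apply: big_ind => //; [apply: spn0 | apply: spnD]. Qed.
Lemma spn_mem u x : x \in u -> spn u x.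
Proof.
move=> xu; pose j : 'I_(size u) := Ordinal (etrans (index_mem x u) xu).
exists (fun i => if i == j then 1 else 0).
rewrite (bigD1 j) //= eqxx scale1r big1 ?addr0 ?nth_index //.
by move=> i /negbTE ->; rewrite scale0r.
Qed.

Lemma z_exists : exists z, Xn z /\ forall x, Xn x -> tr (z * x) = tr x.
Proof.
have [s [hs1 hs2]] := sa_fin (mt_alg H n).
pose u := [seq a * e n * b | a <- s, b <- s].
have Ms a : a \in s -> M n a.
  by move=> /(nthP 0) [i hi <-]; apply: hs1.
have uX x : x \in u -> Xn x.
  by move=> /allpairsP [[a b] [/= ha hb ->]]; apply: Xab; apply: Ms.
have Mspn a b : M n a -> M n b -> spn u (a * e n * b).
  move=> ha hb; have [ca ->] := hs2 a ha; have [cb ->] := hs2 b hb.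
  rewrite !mulr_suml; apply: spn_sum => i; rewrite mulr_sumr; apply: spn_sum => j.
  rewrite -!scalerAl -scalerAr; apply: spnZ; apply: spnZ; apply: spn_mem.
  by apply: allpairs_f; apply: mem_nth.
have Xspn x : Xn x -> spn u x.
  move=> hx; apply: (X_ind (P := spn u)) hx; [exact: spn0 | exact: spnD | exact: Mspn].
pose k := size u.
have uXi (i : 'I_k) : Xn u`_i by apply: uX; apply: mem_nth.
have uM (i : 'I_k) : M n.+1 u`_i by apply: XM.
pose G : 'M[C]_k := \matrix_(i, j) tr (u`_i * u`_j).
pose t : 'rV[C]_k := \row_j tr (u`_j).
have tG : (t <= G)%MS.
  rewrite submxE; apply/eqP/matrixP => i0 j; rewrite !mxE.
  set V := cokermx G.
  pose v := \sum_i V i j *: u`_i.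
  have Xv : Xn v by apply: Xsum => i; apply: XZ.
  have trv : tr v = \sum_i t i0 i * V i j.
    rewrite -[v]mul1r trlin //; last exact: M1.
    by apply: eq_bigr => i _; rewrite mul1r /t mxE mulrC.
  rewrite -trv.
  suff -> : v = 0 by rewrite tr0.
  apply: Xnondeg => // y /Xspn [c ->].
  rewrite mulr_suml (trsum (k := n.+1)); last first.
    by move=> i; rewrite -scalerAl; apply: MZ; apply: MM; [apply: uM | apply: XM].
  apply: big1 => a _; rewrite -scalerAl (trZ _ (MM (uM a) (XM Xv))).
  have := congr1 (fun W : 'M[C]_k => W a j) (mulmx_coker G).
  rewrite !mxE => hG.
  rewrite /v (trlin _ (uM a) uM).
  rewrite -[X in _ * X = _](_ : \sum_i G a i * V i j = _); first by rewrite hG mulr0.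
  by apply: eq_bigr => i _; rewrite mxE mulrC.
have [D tDG] := submxP tG.
exists (\sum_i D 0 i *: u`_i); split; first by apply: Xsum => i; apply: XZ.
have zu (j : 'I_k) : tr ((\sum_i D 0 i *: u`_i) * u`_j) = tr (u`_j).
  rewrite mulr_suml (trsum (k := n.+1)); last first.
    by move=> i; rewrite -scalerAl; apply: MZ; apply: MM.
  have := congr1 (fun W : 'rV[C]_k => W 0 j) tDG; rewrite !mxE => ->.
  apply: eq_bigr => i _; rewrite -scalerAl (trZ _ (MM (uM i) (uM j))) mxE //.
move=> x /Xspn [c ->].
have hz : M n.+1 (\sum_i D 0 i *: u`_i).
  by apply: Msum => i _; apply: MZ.
rewrite trlin // -[X in _ = tr X]mul1r trlin //; last exact: M1.
by apply: eq_bigr => i _; rewrite mul1r zu.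
Qed.

Lemma item5 : exists z, M n.+1 z /\ z * z = z /\ star z = z /\
      (forall m, M n.+1 m -> z * m = m * z) /\
      (forall x, Xsp M e n.+1 x <-> exists m, M n.+1 m /\ x = m * z) /\
      (forall y, Ysp M e n.+1 y <-> exists m, M n.+1 m /\ y = m * (1 - z)).
Proof.
have [z [Xz trz]] := z_exists.
have Mz := XM Xz.
have unitR x : Xn x -> x * z = x.
  move=> hx; apply/eqP; rewrite eq_sym -subr_eq0; apply/eqP.
  have hxz := XmulR Mz hx.
  apply: Xnondeg; first exact: XB.
  move=> y hy; have My := XM hy; have Mx := XM hx.
  rewrite mulrBr (trB (MM My Mx) (MM My (XM hxz))) mulrA.
  by rewrite (trC (MM My Mx) Mz) trz ?subrr //; apply: XmulL.
have unitL x : Xn x -> z * x = x.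
  move=> hx; apply/eqP; rewrite eq_sym -subr_eq0; apply/eqP.
  have hzx := XmulL Mz hx.
  apply: Xnondeg; first exact: XB.
  move=> y hy; have My := XM hy; have Mx := XM hx.
  rewrite mulrBr (trB (MM My Mx) (MM My (XM hzx))) mulrA.
  rewrite (trC (MM My Mz) Mx) mulrA (trC (MM Mx My) Mz) trz; last exact: XmulR.
  by rewrite (trC Mx My) subrr.
exists z; split => //; split; first exact: unitR.
have sz : star z * z = z.
  have := congr1 star (unitR _ (Xstar Xz)); rewrite starM !starK.
  by move=> ->.
split; first by rewrite -[LHS]unitR ?sz //; apply: Xstar.
split.
  move=> m hm; rewrite -[LHS]unitR; last exact: XmulR.
  by rewrite -mulrA unitL //; apply: XmulL.
split.
  move=> x; split.
    by move/XspE => hx; exists x; split; [apply: XM | rewrite unitR].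
  by case=> m [hm ->]; apply/XspE; apply: XmulL.
move=> y; split.
  case=> hy hann; exists y; split => //.
  by rewrite mulrBr mulr1 hann ?subr0 //; apply/XspE.
case=> m [hm ->]; split; first by apply: MM => //; apply: MB => //; apply: M1.
by move=> x /XspE hx; rewrite -mulrA mulrBl mul1r unitL // subrr mulr0.
Qed.

Definition Phi (x xi : A) := d ^+ 2 *: E n.+1 (x * xi * e n).

Lemma PhiK x xi : M n.+1 x -> M n xi ->
  M n (Phi x xi) /\ x * xi * e n = Phi x xi * e n.
Proof. by move=> hx hxi; apply: Kchar; apply: MM => //; apply: MS1. Qed.

Lemma opK p s xi : jones_proj star tr M n p -> pairs_in (M n) s -> M n xi ->
  M n (op_of p s xi) /\
  (\sum_(ab <- s) ab.1 * e n * ab.2) * xi * e n = op_of p s xi * e n.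
Proof.
move=> jp hs hxi; rewrite /op_of; elim: s hs => [|ab s IH] hs.
  by rewrite !big_nil !mul0r; split => //; apply: M0.
have [h1 h2] := hs ab (mem_head _ _).
have [IH1 IH2] : M n (\sum_(ab <- s) ab.1 * p (ab.2 * xi)) /\
   (\sum_(ab <- s) ab.1 * e n * ab.2) * xi * e n = (\sum_(ab <- s) ab.1 * p (ab.2 * xi)) * e n.
  by apply: IH => u us; apply: hs; rewrite inE us orbT.
have hbx := MM h2 hxi.
rewrite !big_cons (p_eq jp hbx); split.
  by apply: MD IH1; apply: (MM h1); exact: (Mpred n0 (Erange n0 hbx)).
rewrite !mulrDl IH2; congr (_ + _).
by rewrite -[RHS]mulrA -(M2 hbx) -!mulrA.
Qed.

Lemma Phi_op p s xi : jones_proj star tr M n p -> pairs_in (M n) s -> M n xi ->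
  Phi (\sum_(ab <- s) ab.1 * e n * ab.2) xi = op_of p s xi.
Proof.
move=> jp hs hxi; have [o1 o2] := opK jp hs hxi.
have hx : Xn (\sum_(ab <- s) ab.1 * e n * ab.2) by exists s.
have [p1 p2] := PhiK (XM hx) hxi.
by apply: inj1 => //; rewrite -p2.
Qed.

Lemma Phi_inj x : Xn x -> (forall xi, M n xi -> Phi x xi = 0) -> x = 0.
Proof.
move=> hx h0; have Mx := XM hx.
have ann y : Xn y -> x * y = 0.
  move=> hy; apply: (X_ind (P := fun y => x * y = 0)) hy; first by rewrite mulr0.
    by move=> y1 y2 e1 e2; rewrite mulrDr e1 e2 addr0.
  move=> a b ha hb; have [_ eq] := PhiK Mx ha.
  by rewrite !mulrA eq h0 // !mul0r.
apply: (tr_faith Mx); rewrite (trC (MS Mx) Mx) ann ?tr0 //; exact: Xstar.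
Qed.

Lemma item6 p : jones_proj star tr M n p ->
   exists Phi : A -> A -> A,
     (forall a b, M n a -> M n b ->
        opeq (M n) (Phi (a * e n * b)) (fun xi => a * p (b * xi))) /\
     (forall x xi, Xsp M e n.+1 x -> M n xi -> M n (Phi x xi)) /\
     (forall (c : C) x y, Xsp M e n.+1 x -> Xsp M e n.+1 y ->
        opeq (M n) (Phi (c *: x + y)) (fun xi => c *: Phi x xi + Phi y xi)) /\
     (forall x y, Xsp M e n.+1 x -> Xsp M e n.+1 y ->
        opeq (M n) (Phi (x * y)) (fun xi => Phi x (Phi y xi))) /\
     (forall x xi eta, Xsp M e n.+1 x -> M n xi -> M n eta ->
        ip star tr (Phi (star x) xi) eta = ip star tr xi (Phi x eta)) /\
     (forall x, Xsp M e n.+1 x -> opeq (M n) (Phi x) (fun _ => 0) -> x = 0) /\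
     (forall x, Xsp M e n.+1 x ->
        exists s, pairs_in (M n) s /\ opeq (M n) (Phi x) (op_of p s)) /\
     (forall s, pairs_in (M n) s ->
        exists x, Xsp M e n.+1 x /\ opeq (M n) (Phi x) (op_of p s)) /\
     (forall x s, Xsp M e n.+1 x -> pairs_in (M n) s ->
        opeq (M n) (Phi x) (op_of p s) ->
        \sum_(ab <- s) tr (ab.1 * ab.2) = d ^+ 2 * tr x).
Proof.
move=> jp; exists Phi.
have pairs1 a b : M n a -> M n b -> pairs_in (M n) [:: (a, b)].
  by move=> ha hb u; rewrite inE => /eqP ->.
split.
  move=> a b ha hb xi hxi; have := Phi_op jp (pairs1 _ _ ha hb) hxi.
  by rewrite /op_of !big_seq1.
split.
  by move=> x xi /XspE hx hxi; have [] := PhiK (XM hx) hxi.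
split.
  move=> c x y /XspE hx /XspE hy xi hxi; rewrite /Phi.
  have hxe := MM (MM (XM hx) (MS1 hxi)) ein.
  have hye := MM (MM (XM hy) (MS1 hxi)) ein.
  rewrite mulrDl mulrDl -!scalerAl (Elin Sn0 _ hxe hye).
  by rewrite scalerDr !scalerA mulrC.
split.
  move=> x y /XspE hx /XspE hy xi hxi.
  have [_ eqy] := PhiK (XM hy) hxi.
  rewrite {1}/Phi; have -> : x * y * xi * e n = x * (y * xi * e n) by rewrite !mulrA.
  by rewrite eqy mulrA.
split.
  move=> x xi eta /XspE hx hxi heta; have Mx := XM hx.
  rewrite /ip.
  have [hw eqw] := PhiK Mx heta; set w := Phi x eta in hw eqw *.
  have hm : M n.+1 (star x * xi * e n) by apply: MM; [apply: MM; [apply: MS | apply: MS1] | apply: ein].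
  rewrite /Phi -scalerAr (trZ _ (MM (MS1 (MS heta)) (MS1 (Erange Sn0 hm)))).
  rewrite -(EL Sn0 (MS heta) hm) (Etr Sn0 (MM (MS1 (MS heta)) hm)).
  rewrite -[tr (star w * xi)]d2Kc -(tr3 (MM (MS hw) hxi)).
  congr (_ * _).
  have hsw : e n * star w = e n * star eta * star x.
    by rewrite -estar -starM -eqw !starM estar mulrA.
  rewrite (trC (MM (MS1 (MS hw)) (MS1 hxi)) ein) [in RHS]mulrA hsw.
  have hY : M n.+1 (star eta * (star x * xi)).
    by apply: MM; [apply: MS1; apply: MS | apply: MM; [apply: MS | apply: MS1]].
  rewrite -!mulrA (trC ein hY).
  by rewrite !mulrA.
split.
  by move=> x /XspE hx h0; apply: Phi_inj.
split.
  move=> x /XspE [s [hs ->]]; exists s; split => // xi hxi; exact: Phi_op.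
split.
  move=> s hs; exists (\sum_(ab <- s) ab.1 * e n * ab.2); split.
    by apply/XspE; exists s.
  by move=> xi hxi; apply: Phi_op.
move=> x s /XspE hx hs hop.
have hx' : Xn (\sum_(ab <- s) ab.1 * e n * ab.2) by exists s.
have -> : x = \sum_(ab <- s) ab.1 * e n * ab.2.
  apply/eqP; rewrite -subr_eq0; apply/eqP; apply: Phi_inj; first exact: XB.
  move=> xi hxi; rewrite /Phi mulrBl mulrBl.
  rewrite (EB Sn0 (MM (MM (XM hx) (MS1 hxi)) ein) (MM (MM (XM hx') (MS1 hxi)) ein)).
  rewrite scalerBr; apply/eqP; rewrite subr_eq0; apply/eqP.
  by have := hop xi hxi; rewrite -(Phi_op jp hs hxi).
rewrite (trsum_in (k := n.+1)); last first.
  by move=> ab /hs [h1 h2]; apply: MM; [apply: MM; [apply: MS1 | apply: ein] | apply: MS1].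
rewrite big_distrr /= !big_seq; apply: eq_bigr => ab /hs [h1 h2].
rewrite (trC (MM (MS1 h1) ein) (MS1 h2)) mulrA (tr3 (MM h2 h1)) (trC h2 h1).
by rewrite d2Kc.
Qed.
End En.


Lemma XspM k x : Xsp M e k x -> M k x.
Proof.
case: k => [|[|m]] /=; try by move=> ->; apply: M0.
by move=> hx; apply: (XM (ltn0Sn m)); exact: hx.
Qed.

Lemma item8a n y x : (0 < n)%N -> Ysp M e n.+1 y -> Xsp M e n x -> y * x = 0.
Proof.
case: n => // n' _ [hy hann]; case: n' hann hy => [|m] hann hy; first by move=> /= ->; rewrite mulr0.
have m0 : (0 < m.+1)%N := ltn0Sn m.
move=> hx; apply: (X_ind (n := m.+1) (P := fun x => y * x = 0)) hx; first by rewrite mulr0.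
  by move=> x1 x2 e1 e2; rewrite mulrDr e1 e2 addr0.
move=> a b ha hb.
have eTL : e m.+1 = d ^+ 2 *: (e m.+1 * e m.+2 * e m.+1).
  by rewrite (mt_e_TL1 H m0) d2K.
have hae : M m.+2 (a * e m.+1) by apply: MM; [apply: MS1 | apply: (ein m0)].
have heb : M m.+2 (e m.+1 * b) by apply: MM; [apply: (ein m0) | apply: MS1].
have XZ : Xsp M e m.+3 (a * e m.+1 * e m.+2 * (e m.+1 * b)).
  by apply/(XspE (ltn0Sn m.+1)); apply: Xab.
rewrite [in a * e m.+1]eTL -scalerAr -scalerAl -scalerAr.
rewrite !mulrA -(mulrA _ (e m.+1) b).
have -> : y * a * e m.+1 * e m.+2 * (e m.+1 * b) = y * (a * e m.+1 * e m.+2 * (e m.+1 * b)) by rewrite !mulrA.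
by rewrite hann // scaler0.
Qed.

Lemma item8b n y : (0 < n)%N -> Ysp M e n.+1 y -> Ysp M e n (E n.+1 y).
Proof.
move=> n0 Yy; have [hy _] := Yy; split; first exact: (Erange (ltn0Sn n) hy).
move=> x hx; rewrite -(ER (ltn0Sn n) (XspM hx) hy) (item8a n0 Yy hx).
exact: E0.
Qed.

Lemma item9step k : (0 < k)%N -> (forall y, Ysp M e k y -> y = 0) ->
  forall y, Ysp M e k.+1 y -> y = 0.
Proof.
move=> k0 h y [hy hann].
have Yyy : Ysp M e k.+1 (star y * y).
  split; first by apply: MM => //; apply: MS.
  by move=> x hx; rewrite -mulrA hann // mulr0.
have := h _ (item8b k0 Yyy) => h0.
apply: (tr_faith hy); rewrite -(Etr (ltn0Sn k) (MM (MS hy) hy)) h0.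
exact: tr0.
Qed.

End Tower.

Unset Implicit Arguments.
Set Strict Implicit.

Theorem mainTheorem4 (C : numClosedFieldType) (A : algType C)
    (star : A -> A) (tr : A -> C) (M : nat -> A -> Prop) (e : nat -> A)
    (E : nat -> A -> A) (d : C) :
  markov_tower star tr M e E d ->
  forall n : nat, (0 < n)%N ->
  (* (1) y |-> y e_n is injective on M_n *)
  (forall y1 y2, M n y1 -> M n y2 -> y1 * e n = y2 * e n -> y1 = y2) /\
  (* (2) d^2 E_(n+1)(x e_n) is the unique y in M_n with x e_n = y e_n *)
  (forall x, M n.+1 x ->
     M n (d ^+ 2 *: E n.+1 (x * e n)) /\
     x * e n = (d ^+ 2 *: E n.+1 (x * e n)) * e n /\
     (forall y, M n y -> x * e n = y * e n -> y = d ^+ 2 *: E n.+1 (x * e n))) /\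
  (* (3) *)
  (forall x, M n x -> tr (x * e n) = d ^- 2 * tr x) /\
  (* (4) e_n M_(n+1) e_n = M_(n-1) e_n *)
  (forall z, (exists x, M n.+1 x /\ z = e n * x * e n) <->
             (exists y, M n.-1 y /\ z = y * e n)) /\
  (* (5) X_(n+1) is a two-sided ideal of M_(n+1) and M_(n+1) = X_(n+1) (+) Y_(n+1) *)
  ((forall x, Xsp M e n.+1 x -> M n.+1 x) /\
   (forall x m, Xsp M e n.+1 x -> M n.+1 m ->
      Xsp M e n.+1 (m * x) /\ Xsp M e n.+1 (x * m)) /\
   (exists z, M n.+1 z /\ z * z = z /\ star z = z /\
      (forall m, M n.+1 m -> z * m = m * z) /\
      (forall x, Xsp M e n.+1 x <-> exists m, M n.+1 m /\ x = m * z) /\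
      (forall y, Ysp M e n.+1 y <-> exists m, M n.+1 m /\ y = m * (1 - z)))) /\
  (* (6), (7) for the Jones projection p_n of M_(n-1) ⊂ (M_n, tr_n) *)
  (forall p, jones_proj star tr M n p ->
   exists Phi : A -> A -> A,
     (* a e_n b |-> a p_n b *)
     (forall a b, M n a -> M n b ->
        opeq (M n) (Phi (a * e n * b)) (fun xi => a * p (b * xi))) /\
     (* Phi x is an operator on L^2(M_n) *)
     (forall x xi, Xsp M e n.+1 x -> M n xi -> M n (Phi x xi)) /\
     (* linear *)
     (forall (c : C) x y, Xsp M e n.+1 x -> Xsp M e n.+1 y ->
        opeq (M n) (Phi (c *: x + y)) (fun xi => c *: Phi x xi + Phi y xi)) /\
     (* multiplicative *)
     (forall x y, Xsp M e n.+1 x -> Xsp M e n.+1 y ->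
        opeq (M n) (Phi (x * y)) (fun xi => Phi x (Phi y xi))) /\
     (* *-preserving (adjoint w.r.t. the L^2 inner product) *)
     (forall x xi eta, Xsp M e n.+1 x -> M n xi -> M n eta ->
        ip star tr (Phi (star x) xi) eta = ip star tr xi (Phi x eta)) /\
     (* injective *)
     (forall x, Xsp M e n.+1 x -> opeq (M n) (Phi x) (fun _ => 0) -> x = 0) /\
     (* onto the basic construction <M_n, p_n> = span M_n p_n M_n *)
     (forall x, Xsp M e n.+1 x ->
        exists s, pairs_in (M n) s /\ opeq (M n) (Phi x) (op_of p s)) /\
     (forall s, pairs_in (M n) s ->
        exists x, Xsp M e n.+1 x /\ opeq (M n) (Phi x) (op_of p s)) /\
     (* (7) canonical trace Tr(sum a_i p_n b_i) = sum tr(a_i b_i) equals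
            d^2 tr_(n+1) under the isomorphism *)
     (forall x s, Xsp M e n.+1 x -> pairs_in (M n) s ->
        opeq (M n) (Phi x) (op_of p s) ->
        \sum_(ab <- s) tr (ab.1 * ab.2) = d ^+ 2 * tr x)) /\
  (* (8) *)
  (forall y x, Ysp M e n.+1 y -> Xsp M e n x -> y * x = 0) /\
  (forall y, Ysp M e n.+1 y -> Ysp M e n (E n.+1 y)) /\
  (* (9) *)
  ((forall y, Ysp M e n y -> y = 0) ->
     forall k, (n <= k)%N -> forall y, Ysp M e k y -> y = 0).
Proof.
move=> H n n0.
split; first by move=> y1 y2; apply: (inj1 H n0).
split.
  move=> x hx; have [h1 h2] := Kchar H n0 hx; split => //; split => //.
  by move=> y hy eq; apply: (inj1 H n0) => //; rewrite -eq.
split; first by move=> x; apply: (tr3 H n0).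
split; first exact: (item4 H n0).
split.
  split; first by move=> x /(XspE M e n0); apply: (XM H n0).
  split; last exact: (item5 H n0).
  move=> x m /(XspE M e n0) hx hm; split; apply/(XspE M e n0).
    exact: (XmulL H n0).
  exact: (XmulR H n0).
split; first exact: (item6 H n0).
split; first by move=> y x; apply: (item8a H n0).
split; first by move=> y; apply: (item8b H n0).
move=> hY k nk; rewrite -(subnKC nk); elim: (k - n)%N => [|j IH]; first by rewrite addn0.
rewrite addnS; apply: (item9step H _ IH).
by apply: leq_trans n0 (leq_addr _ _).
Qed.
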